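(* Let $\lambda=(\lambda_1,\dots,\lambda_n)\in\mathbb{R}^n$ with $\lambda_1+\dots+\lambda_n>0$. (i) The following are equivalent: (a) $N(\lambda)=n$; (b) there is no partition $(I_1,I_2)$ of $\{1,\dots,n\}$ into two sets with $s_{I_1}(\lambda)>0$ and $s_{I_2}(\lambda)>0$. (ii) There exists $k\in\mathbb{Z}$ with $\tau^k(\lambda)>0$. Moreover, if there is no partition $(I_1,I_2)$ of $\{1,\dots,n\}$ with $s_{I_1}(\lambda)>0$ and $s_{I_2}(\lambda)>0$, then such an integer $k$ is uniquely determined modulo $n$.
   Context: $s_J(\lambda)=\sum_{i\in J}\lambda_i$. $\delta(\lambda)$ is the minimum of $s_J(\lambda)/|J|$ over subsets $J\subset\{1,\dots,n\}$ with $s_J(\lambda)>0$ (here $\delta(\lambda)>0$ since the total sum is positive), and $N(\lambda)$ is the minimum of $|J|$ over subsets $J$ with $s_J(\lambda)/|J|=\delta(\lambda)$. $\mathfrak{S}_n$ acts on $\mathbb{R}^n$ by $\sigma(\lambda)=(\lambda_{\sigma^{-1}(1)},\dots,\lambda_{\sigma^{-1}(n)})$; $\tau\in\mathfrak{S}_n$ sends $i$ to $i+1$ for $i<n$ and $n$ to $1$. For $\mu\in\mathbb{R}^n$, $\mu>0$ means $\mu_1+\dots+\mu_i>0$ for all $i\in\{1,\dots,n\}$. *)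

(* Defs.v *)
From HB Require Import structures.
From mathcomp Require Import all_boot all_order all_algebra all_fingroup.
Set Implicit Arguments. Unset Strict Implicit. Unset Printing Implicit Defensive.
Import Order.TTheory GRing.Theory Num.Theory.
Local Open Scope ring_scope.

(* Indices {1,...,n} are represented by 'I_n = {0,...,n-1}. *)

Definition sJ (R : realFieldType) (n : nat) (lam : 'I_n -> R) (J : {set 'I_n}) : R :=
  \sum_(i in J) lam i.

(* delta(lambda): minimum of s_J/|J| over J with s_J > 0.  The seed value
   s_{setT}/n is itself one of the candidates whenever the total sum is
   positive, so under that (standing) hypothesis this is exactly the minimum. *)
Definition delta (R : realFieldType) (n : nat) (lam : 'I_n -> R) : R :=
  \big[Num.min/(sJ lam setT / n%:R)]_(J : {set 'I_n} | 0 < sJ lam J)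
     (sJ lam J / (#|J|)%:R).

(* N(lambda): minimum of |J| over J with s_J/|J| = delta (seed n >= every |J|). *)
Definition Nlam (R : realFieldType) (n : nat) (lam : 'I_n -> R) : nat :=
  \big[minn/n]_(J : {set 'I_n} | sJ lam J / (#|J|)%:R == delta lam) #|J|.

Definition pos_partition (R : realFieldType) (n : nat) (lam : 'I_n -> R) : Prop :=
  exists I1 I2 : {set 'I_n},
    [/\ [disjoint I1 & I2], I1 :|: I2 = setT, 0 < sJ lam I1 & 0 < sJ lam I2].

Definition perm_act (R : realFieldType) (n : nat) (s : {perm 'I_n}) (lam : 'I_n -> R)
  : 'I_n -> R := fun i => lam ((s^-1)%g i).

(* tau : i |-> i+1 (cyclically). *)
Definition tau (n : nat) : {perm 'I_n} := perm (can_inj (@ordSK n)).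

Definition tau_pow (n : nat) (k : int) : {perm 'I_n} :=
  match k with
  | Posz m => (tau n ^+ m)%g
  | Negz m => ((tau n ^+ m.+1)^-1)%g
  end.

(* mu > 0 : all partial sums mu_1 + ... + mu_i (i = 1..n) are positive. *)
Definition pos_vec (R : realFieldType) (n : nat) (mu : 'I_n -> R) : Prop :=
  forall i : 'I_n, 0 < \sum_(j < n | (j <= i)%N) mu j.

(* Main.v *)
Require Import Defs.
From HB Require Import structures.
From mathcomp Require Import all_boot all_order all_algebra all_fingroup.
From mathcomp Require Import ring lra zify.
Import Order.TTheory GRing.Theory Num.Theory.
Local Open Scope ring_scope.
Lemma tauX n (i : 'I_n) m : val ((tau n ^+ m)%g i) = ((i + m) %% n)%N.
Proof.
rewrite permX; elim: m => [|m IH] /=; first by rewrite addn0 modn_small.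
by rewrite /tau permE /= IH -addn1 modnDml addn1 addnS.
Qed.

Lemma tau_n n : (tau n ^+ n = 1)%g.
Proof. by apply/permP=> i; apply/val_inj; rewrite tauX perm1 modnDr modn_small. Qed.

Lemma tau_pow_inv n k : (0 < n)%N -> exists c : nat,
  (c%:Z + k = 0 %[mod n%:Z])%Z /\ forall i, ((tau_pow n k)^-1)%g i = (tau n ^+ c)%g i.
Proof.
move=> n0; case: k => m /=.
  exists (m * n - m)%N; split.
    have -> : ((m * n - m)%N%:Z + m%:Z = (m * n)%N%:Z)%R.
      by rewrite -PoszD subnK // leq_pmulr.
    by rewrite PoszM modzMl mod0z.
  move=> i; apply: (@perm_inj _ (tau n ^+ m)%g); rewrite permKV -permM -expgD.
  by rewrite subnK ?leq_pmulr // mulnC expgM tau_n expg1n perm1.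
exists m.+1; split; first by rewrite NegzE addrN.
by move=> i; rewrite invgK.
Qed.
Definition fl (R : realFieldType) n' (lam : 'I_n'.+1 -> R) (j : nat) : R :=
  lam (inord (j %% n'.+1)).
Arguments fl {R n'} lam j.
Definition Ps (R : realFieldType) n' (lam : 'I_n'.+1 -> R) (m : nat) : R :=
  \sum_(0 <= j < m) fl lam j.
Arguments Ps {R n'} lam m.

Lemma fl_tau {R : realFieldType} {n' : nat} (lam : 'I_n'.+1 -> R) c (j : 'I_n'.+1) :
  lam ((tau _ ^+ c)%g j) = fl lam (j + c).
Proof.
rewrite /fl; congr (lam _); apply/val_inj; rewrite tauX /= inordK //.
by rewrite ltn_pmod.
Qed.

Lemma fl_per {R : realFieldType} {n' : nat} (lam : 'I_n'.+1 -> R) j :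
  fl lam (j + n'.+1) = fl lam j.
Proof. by rewrite /fl modnDr. Qed.

Lemma Ps_add {R : realFieldType} {n' : nat} (lam : 'I_n'.+1 -> R) c m :
  \sum_(0 <= j < m) fl lam (j + c) = Ps lam (c + m) - Ps lam c.
Proof.
rewrite /Ps (@big_cat_nat _ _ _ c 0 (c + m)) /= ?leq_addr // addrAC subrr add0r.
by rewrite -{2}[c]add0n big_addn addKn.
Qed.

Lemma Ps_per {R : realFieldType} {n' : nat} (lam : 'I_n'.+1 -> R) t :
  Ps lam (t + n'.+1) = Ps lam t + Ps lam n'.+1.
Proof.
have h := Ps_add lam n'.+1 t.
have e : \sum_(0 <= j < t) fl lam (j + n'.+1) = Ps lam t.
  by apply: eq_bigr => j _; rewrite fl_per.
rewrite e in h; rewrite addnC; lra.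
Qed.

Lemma Ps_n {R : realFieldType} {n' : nat} (lam : 'I_n'.+1 -> R) :
  Ps lam n'.+1 = \sum_(i < n'.+1) lam i.
Proof.
rewrite /Ps big_mkord; apply: eq_bigr => i _; rewrite /fl modn_small //.
by rewrite inord_val.
Qed.

Lemma sum_le (R : realFieldType) n (g : nat -> R) (i : 'I_n) :
  \sum_(j < n | (j <= i)%N) g j = \sum_(0 <= j < i.+1) g j.
Proof.
rewrite (big_nat_widen _ _ _ _ _ (ltn_ord i)) big_mkord.
by apply: eq_bigl => j.
Qed.

Lemma sum_lt {R : realFieldType} {n' : nat} (lam : 'I_n'.+1 -> R) m : (m <= n'.+1)%N ->
  \sum_(i < n'.+1 | (i < m)%N) lam i = Ps lam m.
Proof.
move=> hm; rewrite /Ps (big_nat_widen _ _ _ _ _ hm) big_mkord.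
apply: eq_bigr => i _; rewrite /fl modn_small //.
by rewrite inord_val.
Qed.

Lemma rot_sum {R : realFieldType} {n' : nat} (lam : 'I_n'.+1 -> R) c (i : 'I_n'.+1) :
  \sum_(j < n'.+1 | (j <= i)%N) lam ((tau _ ^+ c)%g j) = Ps lam (c + i.+1) - Ps lam c.
Proof.
rewrite -Ps_add -(@sum_le R _ (fun j => fl lam (j + c))).
by apply: eq_bigr => j _; rewrite fl_tau.
Qed.
Lemma last_min (R : realFieldType) (g : nat -> R) N : exists c,
  [/\ (c <= N)%N, forall t, (t <= N)%N -> g c <= g t &
      forall t, (c < t)%N -> (t <= N)%N -> g c < g t].
Proof.
elim: N => [|N [c [hc hmin hstr]]].
  exists 0%N; split => // t; first by rewrite leqn0 => /eqP->.
  by move=> h1 h2; have := leq_trans h1 h2.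
have [h|h] := leP (g N.+1) (g c).
  exists N.+1; split => // t.
    rewrite leq_eqVlt => /orP[/eqP->//|]; rewrite ltnS => ht.
    exact: le_trans h (hmin t ht).
  by move=> h1 h2; have := leq_trans h1 h2; rewrite ltnn.
exists c; split; first exact: leqW.
  move=> t; rewrite leq_eqVlt => /orP[/eqP->|]; first exact: ltW.
  by rewrite ltnS; apply: hmin.
move=> t hct; rewrite leq_eqVlt => /orP[/eqP->//|]; rewrite ltnS.
exact: hstr.
Qed.

Definition rotpos {R : realFieldType} {n' : nat} (lam : 'I_n'.+1 -> R) (d : nat) :=
  forall i : 'I_n'.+1, 0 < Ps lam (d + i.+1) - Ps lam d.

Lemma exists_rot {R : realFieldType} {n' : nat} (lam : 'I_n'.+1 -> R) :
  0 < Ps lam n'.+1 -> exists2 c, (c < n'.+1)%N & rotpos lam c.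
Proof.
move=> hp; have [c [hc hmin hstr]] := @last_min R (Ps lam) n'.
exists c => // i; have hi := ltn_ord i.
case: (leqP (c + i.+1) n') => ht.
  by rewrite subr_gt0; apply: hstr => //; rewrite -addn1 leq_add2l.
have e : (c + i.+1 = (c + i.+1 - n'.+1) + n'.+1)%N by rewrite subnK.
rewrite e Ps_per.
have : Ps lam c <= Ps lam (c + i.+1 - n'.+1) by apply: hmin; lia.
lra.
Qed.

Lemma sJ_setT {R : realFieldType} {n' : nat} (lam : 'I_n'.+1 -> R) :
  sJ lam setT = Ps lam n'.+1.
Proof. by rewrite Ps_n /sJ; apply: eq_bigl => i; rewrite inE. Qed.

Lemma sJ_C {R : realFieldType} {n' : nat} (lam : 'I_n'.+1 -> R) (I : {set 'I_n'.+1}) :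
  sJ lam (~: I) = Ps lam n'.+1 - sJ lam I.
Proof.
rewrite -sJ_setT /sJ [in RHS](big_setID I) /= setTI setTD; lra.
Qed.

Lemma two_rot {R : realFieldType} {n' : nat} (lam : 'I_n'.+1 -> R) d1 d2 :
  (d1 < d2)%N -> (d2 < n'.+1)%N -> rotpos lam d1 -> rotpos lam d2 ->
  pos_partition lam.
Proof.
move=> h12 h2 r1 r2.
pose I1 := [set j : 'I_n'.+1 | (d1 <= j < d2)%N].
have e : \sum_(i < n'.+1 | (i < d2)%N) lam i
         = \sum_(i < n'.+1 | (i < d1)%N) lam i + sJ lam I1.
  rewrite (bigID (fun i : 'I__ => (i < d1)%N)) /=; congr (_ + _).
    apply: eq_bigl => i /=; apply/idP/idP => [/andP[]//|h]; apply/andP; split=>//.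
    exact: ltn_trans h h12.
  apply: eq_bigl => i /=; rewrite inE -leqNgt andbC //.
rewrite !sum_lt in e; try lia.
exists I1, (~: I1); split.
- by rewrite -setI_eq0 setICr.
- by rewrite setUCr.
- have hi : ((d2 - d1.+1) < n'.+1)%N by lia.
  have := r1 (Ordinal hi); rewrite /= (_ : (d1 + (d2 - d1.+1).+1)%N = d2); last lia.
  lra.
- have hi : ((n' + d1 - d2) < n'.+1)%N by lia.
  have := r2 (Ordinal hi); rewrite /= (_ : (d2 + (n' + d1 - d2).+1)%N = d1 + n'.+1); last lia.
  rewrite Ps_per sJ_C; lra.
Qed.
Lemma sJ_setTg {R : realFieldType} {n : nat} (lam : 'I_n -> R) :
  sJ lam setT = \sum_(i < n) lam i.
Proof. by rewrite /sJ; apply: eq_bigl => i; rewrite inE. Qed.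

Lemma sJ_Cg {R : realFieldType} {n : nat} (lam : 'I_n -> R) (I : {set 'I_n}) :
  sJ lam (~: I) = sJ lam setT - sJ lam I.
Proof. rewrite /sJ [in RHS](big_setID I) /= setTI setTD; lra. Qed.

Lemma sJ_card0 {R : realFieldType} {n : nat} {lam : 'I_n -> R} {I : {set 'I_n}} :
  0 < sJ lam I -> (0 < #|I|)%N.
Proof.
rewrite lt0n; apply: contraTneq => /cards0_eq ->.
by rewrite /sJ big_set0 ltxx.
Qed.

Lemma delta_le {R : realFieldType} {n : nat} {lam : 'I_n -> R} {J : {set 'I_n}} :
  0 < sJ lam J -> delta lam <= sJ lam J / (#|J|)%:R.
Proof. by move=> hJ; rewrite /delta (bigD1 J) //= ge_min lexx. Qed.

Lemma delta_att {R : realFieldType} {n : nat} {lam : 'I_n -> R} :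
  0 < sJ lam setT -> exists J, 0 < sJ lam J /\ sJ lam J / (#|J|)%:R = delta lam.
Proof.
move=> hT; rewrite /delta.
apply: (big_ind (fun x => exists J, 0 < sJ lam J /\ sJ lam J / (#|J|)%:R = x)).
- by exists setT; rewrite cardsT card_ord.
- move=> x y hx hy; rewrite /Num.min /Order.min; by case: ifP.
- by move=> J hJ; exists J.
Qed.

Lemma Nlam_le {R : realFieldType} {n : nat} {lam : 'I_n -> R} {J : {set 'I_n}} :
  sJ lam J / (#|J|)%:R == delta lam -> (Nlam lam <= #|J|)%N.
Proof.
move=> hJ; rewrite /Nlam -big_filter.
have : J \in [seq i <- index_enum {set 'I_n} | sJ lam i / (#|i|)%:R == delta lam].
  by rewrite mem_filter hJ mem_index_enum.
elim: (filter _ _) => [|a s IH] //=; rewrite big_cons inE => /orP[/eqP<-|/IH h].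
  exact: geq_minl.
exact: leq_trans (geq_minr _ _) h.
Qed.

Lemma Nlam_le_n {R : realFieldType} {n : nat} (lam : 'I_n -> R) : (Nlam lam <= n)%N.
Proof.
rewrite /Nlam; apply: (big_ind (fun x => x <= n)%N) => //.
  by move=> x y hx hy; rewrite geq_min hx.
by move=> J _; apply: leq_trans (max_card _) _; rewrite card_ord.
Qed.

Lemma Nlam_ge {R : realFieldType} {n : nat} (lam : 'I_n -> R) :
  (forall J : {set 'I_n}, sJ lam J / (#|J|)%:R == delta lam -> (n <= #|J|)%N) ->
  (n <= Nlam lam)%N.
Proof.
move=> h; rewrite /Nlam; apply: (big_ind (fun x => n <= x)%N) => //.
by move=> x y hx hy; rewrite leq_min hx.
Qed.

Lemma partI {R : realFieldType} {n : nat} (lam : 'I_n -> R) :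
  0 < sJ lam setT -> (Nlam lam = n <-> ~ pos_partition lam).
Proof.
move=> hT; have [J0 [hJ0 eJ0]] := delta_att hT.
have cJ0 := sJ_card0 hJ0.
have dpos : 0 < delta lam by rewrite -eJ0 divr_gt0 // ltr0n.
split.
- move=> hN [I1 [I2 [hd hU h1 h2]]].
  have eI2 : I2 = ~: I1.
    apply/setP => i; move/setP: (hU) => /(_ i); have := disjoint_setI0 hd.
    move/setP/(_ i); rewrite !inE.
    by case: (i \in I1); case: (i \in I2).
  subst I2.
  have c1 := sJ_card0 h1; have c2 := sJ_card0 h2.
  have hc : (#|I1| + #|~: I1| = n)%N by rewrite cardsC card_ord.
  case: (ltnP #|J0| n) => hJn.
    by have := Nlam_le (introT eqP eJ0); rewrite hN leqNgt hJn.
  have eJ : J0 = setT.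
    by apply/eqP; rewrite eqEcard subsetT cardsT card_ord.
  subst J0; rewrite cardsT card_ord in eJ0.
  have d1 := delta_le h1; have d2 := delta_le h2.
  rewrite ler_pdivlMr ?ltr0n // in d1.
  rewrite ler_pdivlMr ?ltr0n // in d2.
  have n0 : (0 < n)%N by lia.
  have eT : sJ lam setT = delta lam * n%:R.
    by rewrite -eJ0 divfK // pnatr_eq0 -lt0n.
  have sC := sJ_Cg lam I1.
  have en : (n%:R : R) = (#|I1|)%:R + (#|~: I1|)%:R by rewrite -natrD hc.
  have e1 : sJ lam I1 = delta lam * (#|I1|)%:R.
    rewrite en in eT; lra.
  have : sJ lam I1 / (#|I1|)%:R == delta lam.
    by rewrite e1 mulfK // pnatr_eq0 -lt0n.
  by move/Nlam_le; rewrite hN; lia.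
- move=> hnp; apply/eqP; rewrite eqn_leq Nlam_le_n Nlam_ge // => J /eqP hJ.
  rewrite leqNgt; apply/negP => hlt.
  have cJ : (0 < #|J|)%N.
    rewrite lt0n; apply/negP => /eqP h0.
    by move: hJ dpos; rewrite h0 invr0 mulr0 => <-; rewrite ltxx.
  have eJ : sJ lam J = delta lam * (#|J|)%:R.
    by rewrite -hJ divfK // pnatr_eq0 -lt0n.
  have sJp : 0 < sJ lam J by rewrite eJ mulr_gt0 // ltr0n.
  have hC : sJ lam (~: J) <= 0.
    rewrite leNgt; apply/negP => hc; apply: hnp; exists J, (~: J); split => //.
    - by rewrite -setI_eq0 setICr.
    - by rewrite setUCr.
  have sC := sJ_Cg lam J.
  have dT := delta_le hT; rewrite cardsT card_ord in dT.
  have n0 : (0 < n)%N by lia.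
  rewrite ler_pdivlMr ?ltr0n // in dT.
  have hl : ((#|J|)%:R : R) < n%:R by rewrite ltr_nat.
  nra.
Qed.
Theorem mainTheorem12 (R : realFieldType) (n : nat) (lam : 'I_n -> R)
    (hpos : 0 < \sum_(i < n) lam i) :
  (Nlam lam = n <-> ~ pos_partition lam) /\
  (exists k : int, pos_vec (perm_act (tau_pow n k) lam)) /\
  (~ pos_partition lam ->
     forall k1 k2 : int,
       pos_vec (perm_act (tau_pow n k1) lam) ->
       pos_vec (perm_act (tau_pow n k2) lam) ->
       (k1 = k2 %[mod n%:Z])%Z).
Proof.
case: n lam hpos => [|n'] lam hpos; first by rewrite big_ord0 ltxx in hpos.
have hT : 0 < sJ lam setT by rewrite sJ_setTg.
have hP : 0 < Ps lam n'.+1 by rewrite Ps_n.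
have rotE : forall k, exists c : nat, (c%:Z + k = 0 %[mod n'.+1])%Z /\
    (pos_vec (perm_act (tau_pow n'.+1 k) lam) <-> rotpos lam (c %% n'.+1)%N).
  move=> k; have [c [hc hinv]] := @tau_pow_inv n'.+1 k (ltn0Sn n').
  exists c; split => //.
  have e : forall i : 'I_n'.+1, \sum_(j < n'.+1 | (j <= i)%N) perm_act (tau_pow n'.+1 k) lam j
      = Ps lam ((c %% n'.+1) + i.+1) - Ps lam (c %% n'.+1).
    move=> i; rewrite -rot_sum; apply: eq_bigr => j _.
    by rewrite /perm_act hinv (expg_mod c (tau_n n'.+1)).
  by rewrite /pos_vec /rotpos; split => h i; [rewrite -e | rewrite e].
split; first exact: partI.
split.
  have [c hc hr] := exists_rot lam hP.
  exists (Negz (c + n')) => i /=.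
  have := hr i; rewrite -rot_sum; congr (0 < _); apply: eq_bigr => j _.
  rewrite /perm_act /= invgK -addnS expgD tau_n mulg1 //.
move=> hnp k1 k2 p1 p2.
have [c1 [hc1 E1]] := rotE k1; have [c2 [hc2 E2]] := rotE k2.
move/E1: p1 => p1; move/E2: p2 => p2.
have hd : (c1 %% n'.+1 = c2 %% n'.+1)%N.
  have l1 := ltn_pmod c1 (ltn0Sn n'); have l2 := ltn_pmod c2 (ltn0Sn n').
  case: (ltngtP (c1 %% n'.+1) (c2 %% n'.+1)) => // h.
    by case: hnp; exact: (two_rot lam _ _ h l2 p1 p2).
  by case: hnp; exact: (two_rot lam _ _ h l1 p2 p1).
apply/eqP; rewrite eqz_mod_dvd.
have h1 : (n'.+1%:Z %| c1%:Z + k1)%Z.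
  by rewrite -(subr0 (c1%:Z + k1)) -eqz_mod_dvd; apply/eqP.
have h2 : (n'.+1%:Z %| c2%:Z + k2)%Z.
  by rewrite -(subr0 (c2%:Z + k2)) -eqz_mod_dvd; apply/eqP.
have h3 : (n'.+1%:Z %| c1%:Z - c2%:Z)%Z.
  by rewrite -eqz_mod_dvd; apply/eqP; rewrite !modz_nat hd.
have -> : k1 - k2 = (c1%:Z + k1) - (c2%:Z + k2) - (c1%:Z - c2%:Z) by ring.
by apply: rpredB => //; apply: rpredB.
Qed.
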